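(* Assume the setting described in the context and suppose the event $\mathcal{E}$ holds. There is an absolute constant $C>0$ such that for any $\gamma\in(0,1)$, if $$ m\ \ge\ C\frac{(1+\theta)^2}{\theta^2(1-\gamma)^2}s^2(1)\log n, $$ then the set $S^{(1)}=\{j^\ast\}$, where $j^\ast$ maximizes $|\hat{\boldsymbol{\Gamma}}_{jj}|$ over $j\in[n]$, satisfies $$ \|\mathbf{v}_{S^{(1)}}\|_2\ \ge\ \sqrt{\frac{\gamma}{s(1)}}. $$
   Context: Let $n\ge 2$, $m\ge1$, $\theta>0$, $k\in[n]$; $\mathbf{v}\in\mathbb{R}^n$ a unit vector with at most $k$ nonzero entries; $\mathbf{x}_1,\dots,\mathbf{x}_m$ i.i.d. $\mathcal{N}(\mathbf{0},\mathbf{I}_n+\theta\mathbf{v}\mathbf{v}^\top)$; $\hat{\boldsymbol{\Gamma}}=\frac1m\sum_i\mathbf{x}_i\mathbf{x}_i^\top-\mathbf{I}_n$; $\mathbf{W}=\hat{\boldsymbol{\Gamma}}-\theta\mathbf{v}\mathbf{v}^\top$. $\mathbf{v}_S$ is the restriction of $\mathbf{v}$ to $S$, $\mathbf{W}_{S,S}$ a principal submatrix, $\|\cdot\|_2$ Euclidean/spectral norm. $v_{(1)}\ge v_{(2)}\ge\cdots$ are the sorted absolute entries of $\mathbf{v}$ and $s(p)=(\sum_{i=1}^pv_{(i)}^2)^{-1}$; in particular $s(1)=v_{(1)}^{-2}$. Fix an absolute constant $C_0>0$; $\mathcal{E}$ is the event that $\|\mathbf{W}_{S,S}\|_2\le C_0(1+\theta)\sqrt{|S|\log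 n/m}$ for all nonempty $S\subseteq[n]$. Absolute constants do not depend on $n,m,k,\theta,\mathbf{v},\gamma$. *)

(* Defs.v *)
From HB Require Import structures.
From mathcomp Require Import all_boot all_order all_algebra.
From mathcomp Require Import all_classical all_reals exp.
Set Implicit Arguments. Unset Strict Implicit. Unset Printing Implicit Defensive.
Import Order.TTheory GRing.Theory Num.Theory.
Local Open Scope ring_scope.
Local Open Scope classical_set_scope.

Section Defs.
Variable R : realType.

Definition vnorm2 q (u : 'cV[R]_q) : R := Num.sqrt (\sum_i (u i ord0) ^+ 2).

Definition specnorm p q (A : 'M[R]_(p, q)) : R :=
  sup [set vnorm2 (A *m u) | u in [set u : 'cV[R]_q | vnorm2 u <= 1]].

(* principal submatrix A_{S,S} (indices of S in increasing order) *)
Definition prinsub n (A : 'M[R]_n) (S : {set 'I_n}) : 'M[R]_#|S| :=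
  \matrix_(i < #|S|, j < #|S|) A (enum_val i) (enum_val j).

Definition restr_norm n (v : 'cV[R]_n) (S : {set 'I_n}) : R :=
  Num.sqrt (\sum_(i in S) (v i ord0) ^+ 2).

Definition vmax1 n (v : 'cV[R]_n) : R := \big[Num.max/0]_i `|v i ord0|.
Definition s1 n (v : 'cV[R]_n) : R := (vmax1 v ^+ 2)^-1.

Definition hatGamma n m (x : 'I_m -> 'cV[R]_n) : 'M[R]_n :=
  (m%:R)^-1 *: (\sum_i (x i *m (x i)^T)) - 1%:M.

Definition Wmat n m (x : 'I_m -> 'cV[R]_n) (theta : R) (v : 'cV[R]_n) : 'M[R]_n :=
  hatGamma x - theta *: (v *m v^T).

Definition eventE n m (x : 'I_m -> 'cV[R]_n) (theta : R) (v : 'cV[R]_n) (C0 : R) : Prop :=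
  forall S : {set 'I_n}, (0 < #|S|)%N ->
    specnorm (prinsub (Wmat x theta v) S)
      <= C0 * (1 + theta) * Num.sqrt (#|S|%:R * ln (n%:R) / m%:R).
End Defs.

(* Main.v *)
Require Import Defs.
From HB Require Import structures.
From mathcomp Require Import all_boot all_order all_algebra.
From mathcomp Require Import all_classical all_reals exp.
Import Order.TTheory GRing.Theory Num.Theory.
Local Open Scope ring_scope.

Lemma spec1 (R : realType) p (A : 'M[R]_p) (i : 'I_p) : p = 1%N ->
  `|A i i| <= specnorm A.
Proof.
move=> e; subst p.
have -> : i = ord0 by apply/val_inj; case: i => [[|]].
rewrite /specnorm.
have vn : forall w : 'cV[R]_1, vnorm2 w = `|w ord0 ord0|.
  by move=> w; rewrite /vnorm2 big_ord1 sqrtr_sqr.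
have hs : has_sup [set vnorm2 (A *m u) | u in [set u : 'cV[R]_1 | vnorm2 u <= 1]].
  split.
    by exists (vnorm2 (A *m const_mx 1)); exists (const_mx 1) => //=; rewrite vn mxE normr1.
  exists `|A ord0 ord0| => y [u /= hu <-].
  rewrite vn mxE big_ord1 normrM; rewrite vn in hu.
  by rewrite ler_piMr.
apply: (sup_upper_bound hs).
exists (const_mx 1) => /=; first by rewrite vn mxE normr1.
by rewrite vn mxE big_ord1 mxE mulr1.
Qed.

Lemma hatW (R : realType) n m (x : 'I_m -> 'cV[R]_n) theta v i :
  hatGamma x i i = Wmat x theta v i i + theta * v i ord0 ^+ 2.
Proof.
by rewrite /Wmat !mxE big_ord1 !mxE expr2 subrK.
Qed.

Lemma Wbound (R : realType) n m (x : 'I_m -> 'cV[R]_n) theta v C0 i :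
  eventE x theta v C0 ->
  `|Wmat x theta v i i| <= C0 * (1 + theta) * Num.sqrt (ln (n%:R) / m%:R).
Proof.
move=> hE.
have c1 : #|[set i]| = 1%N by rewrite cards1.
have := hE [set i] (ltac:(by rewrite c1)); rewrite [in X in _ <= X]c1 mul1r; apply: le_trans.
have j0 : 'I_#|[set i]| by rewrite c1; exact: ord0.
have := @spec1 _ _ (prinsub (Wmat x theta v) [set i]) j0 c1.
have : enum_val j0 = i by apply/set1P; exact: enum_valP.
by rewrite /prinsub mxE => ->.
Qed.

From mathcomp Require Import ring lra.

Theorem proposition3 (R : realType) (C0 : R) (hC0 : 0 < C0) :
  exists C : R, 0 < C /\
  forall (n m k : nat) (theta : R) (v : 'cV[R]_n) (x : 'I_m -> 'cV[R]_n)
         (gamma : R) (jstar : 'I_n),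
    (2 <= n)%N -> (1 <= m)%N -> 0 < theta -> (1 <= k <= n)%N ->
    \sum_i (v i ord0) ^+ 2 = 1 ->
    (#|[set i | v i ord0 != 0%R]| <= k)%N ->
    eventE x theta v C0 ->
    0 < gamma < 1 ->
    m%:R >= C * (1 + theta) ^+ 2 / (theta ^+ 2 * (1 - gamma) ^+ 2)
              * (s1 v) ^+ 2 * ln (n%:R) ->
    (forall j : 'I_n, `|hatGamma x j j| <= `|hatGamma x jstar jstar|) ->
    restr_norm v [set jstar] >= Num.sqrt (gamma / s1 v).
Proof.
exists (4 * C0 ^+ 2); split; first by rewrite mulr_gt0 // exprn_gt0.
move=> n m k theta v x gamma jstar hn hm ht _ _ _ hE /andP[g0 g1] hM hmax.
have i0 : 'I_n by exists 0%N; apply: leq_trans hn.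
pose j0 := [arg max_(i > i0) `|v i ord0|]%O.
have ha : vmax1 v = `|v j0 ord0|.
  by rewrite /vmax1 (bigmax_eq_arg _ i0) //.
rewrite /restr_norm big_set1.
have [a0|anz] := eqVneq (vmax1 v) 0.
  have -> : s1 v = 0 by rewrite /s1 a0 expr2 mulr0 invr0.
  by rewrite invr0 mulr0 sqrtr0 sqrtr_ge0.
set a := vmax1 v in ha anz hM *.
have apos : 0 < a by rewrite lt_def anz ha normr_ge0.
have hs : s1 v = (a ^+ 2)^-1 by [].
rewrite hs invrK.
set L := ln (n%:R : R).
have L0 : 0 < L by apply: ln_gt0; rewrite ltr1n.
set M := (m%:R : R).
have M0 : 0 < M by rewrite ltr0n.
set eps := C0 * (1 + theta) * Num.sqrt (L / M).
have hW : forall i, `|Wmat x theta v i i| <= eps by move=> i; exact: Wbound.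
have e0 : 0 <= eps.
  have t1 : 0 <= 1 + theta by lra.
  by rewrite mulr_ge0 ?sqrtr_ge0 // mulr_ge0 // ltW.
set K := theta ^+ 2 * (1 - gamma) ^+ 2 * a ^+ 4.
have g2 : 0 < 1 - gamma by rewrite subr_gt0.
have K0 : 0 < K by rewrite /K !mulr_gt0 // exprn_gt0.
have hX : 4 * C0 ^+ 2 * (1 + theta) ^+ 2 / (theta ^+ 2 * (1 - gamma) ^+ 2)
              * (s1 v) ^+ 2 * L = (4 * C0 ^+ 2 * (1 + theta) ^+ 2 * L) / K.
  rewrite hs /K; field.
  have h1 : theta != 0 by rewrite gt_eqF.
  have h2 : 1 - gamma != 0 by rewrite gt_eqF.
  have h3 : a != 0 by rewrite gt_eqF.
  by rewrite h1 h2 h3.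
rewrite hX ler_pdivrMr // in hM.
have heps2 : (2 * eps) ^+ 2 = (4 * C0 ^+ 2 * (1 + theta) ^+ 2 * L) / M.
  rewrite /eps !exprMn sqr_sqrtr; last by rewrite divr_ge0 // ltW.
  rewrite /L /M; field; by rewrite gt_eqF.
have hK : (2 * eps) ^+ 2 <= (theta * (1 - gamma) * a ^+ 2) ^+ 2.
  rewrite heps2 ler_pdivrMr //.
  suff -> : (theta * (1 - gamma) * a ^+ 2) ^+ 2 = K by rewrite [K * M]mulrC.
  by rewrite /K; ring.
have t0 : 0 <= theta * (1 - gamma) * a ^+ 2.
  by rewrite mulr_ge0 // mulr_ge0 ?ltW.
have h2e : 2 * eps <= theta * (1 - gamma) * a ^+ 2.
  move: hK t0 e0; set p := 2 * eps; set q := theta * _ * _ => hK t0 e0.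
  have p0 : 0 <= p by rewrite mulr_ge0.
  nra.
have hj0 := hmax j0.
rewrite !(@hatW _ _ _ x theta v) in hj0.
have w0 := hW j0; have w1 := hW jstar.
rewrite ler_norml in w0; move/andP: w0 => [w0 w0'].
have l1 : Wmat x theta v j0 j0 + theta * v j0 ord0 ^+ 2
   <= `|Wmat x theta v j0 j0 + theta * v j0 ord0 ^+ 2| by apply: ler_norm.
have l2 := ler_normD (Wmat x theta v jstar jstar) (theta * v jstar ord0 ^+ 2).
have l3 : `|theta * v jstar ord0 ^+ 2| = theta * v jstar ord0 ^+ 2.
  by apply/ger0_norm; apply: mulr_ge0; [exact: ltW | exact: sqr_ge0].
have ea : a ^+ 2 = v j0 ord0 ^+ 2 by rewrite ha real_normK // num_real.
rewrite -ea in l1 hj0.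
have : theta * a ^+ 2 <= theta * v jstar ord0 ^+ 2 + theta * (1 - gamma) * a ^+ 2.
  lra.
move=> h.
have : gamma * a ^+ 2 <= v jstar ord0 ^+ 2.
  have : theta * (gamma * a ^+ 2) <= theta * v jstar ord0 ^+ 2 by lra.
  by rewrite ler_pM2l.
move=> h'.
by rewrite ler_sqrt // sqr_ge0.
Qed.
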